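(* Let $\underline x<\overline x$ and $\underline y<\overline y$ be real numbers and $\alpha\in\mathbb{R}$. Then the convex hull of $$T_\alpha=\{(x,y)\in\mathbb{R}^2:\ xy=\alpha,\ x\in[\underline x,\overline x],\ y\in[\underline y,\overline y]\}$$ is second-order cone representable.
   Context: A set $S\subseteq\mathbb{R}^n$ is second-order cone representable if it is the projection onto the first $n$ coordinates of a set $\{(x,u)\in\mathbb{R}^n\times\mathbb{R}^m\}$ defined by finitely many linear equalities/inequalities and constraints of the form $\|A_k(x,u)+b_k\|_2\le c_k^T(x,u)+d_k$. *)

(* Defs.v *)
From Stdlib Require Import Reals List.
Import ListNotations.
Open Scope R_scope.

(* Points of R^k are represented as functions nat -> R; a point of R^k is
   "canonical" when all coordinates of index >= k vanish. *)
Definition canonical (k : nat) (x : nat -> R) : Prop :=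
  forall i, (k <= i)%nat -> x i = 0.

Fixpoint sumR (k : nat) (f : nat -> R) : R :=
  match k with
  | O => 0
  | S k' => sumR k' f + f k'
  end.

Definition dotn (k : nat) (a z : nat -> R) : R := sumR k (fun i => a i * z i).

Definition join (n : nat) (x u : nat -> R) : nat -> R :=
  fun i => if Nat.ltb i n then x i else u (i - n)%nat.

(* A second-order cone constraint ||A z + b||_2 <= c^T z + d on R^N,
   where A has soc_rows rows (row r is the coefficient vector soc_A r). *)
Record soc_constraint := {
  soc_rows : nat;
  soc_A : nat -> nat -> R;
  soc_b : nat -> R;
  soc_c : nat -> R;
  soc_d : R }.

Definition soc_holds (N : nat) (C : soc_constraint) (z : nat -> R) : Prop :=
  sqrt (sumR (soc_rows C) (fun r => (dotn N (soc_A C r) z + soc_b C r) ^ 2))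
  <= dotn N (soc_c C) z + soc_d C.

(* S (a subset of R^n, tested on canonical points) is second-order cone
   representable: it is the projection onto the first n coordinates of a set
   {(x,u) in R^n x R^m} described by finitely many linear equalities
   a^T(x,u) = beta, linear inequalities a^T(x,u) <= beta and SOC constraints. *)
Definition soc_representable (n : nat) (S : (nat -> R) -> Prop) : Prop :=
  exists (m : nat) (eqs ineqs : list ((nat -> R) * R)) (socs : list soc_constraint),
    forall x, canonical n x ->
      (S x <->
       exists u : nat -> R,
         let z := join n x u in
         Forall (fun e => dotn (n + m) (fst e) z = snd e) eqs /\
         Forall (fun e => dotn (n + m) (fst e) z <= snd e) ineqs /\
         Forall (fun C => soc_holds (n + m) C z) socs).

Definition conv_hull (S : (nat -> R) -> Prop) (x : nat -> R) : Prop :=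
  exists l : list (R * (nat -> R)),
    Forall (fun wp => 0 <= fst wp /\ S (snd wp)) l /\
    fold_right (fun wp acc => fst wp + acc) 0 l = 1 /\
    forall i, x i = fold_right (fun wp acc => fst wp * snd wp i + acc) 0 l.

Definition T_alpha (xl xu yl yu alpha : R) (p : nat -> R) : Prop :=
  canonical 2 p /\ p 0%nat * p 1%nat = alpha /\
  xl <= p 0%nat <= xu /\ yl <= p 1%nat <= yu.

(* Main.v *)
Require Import Defs.
From Stdlib Require Import Reals List Lra Psatz Classical.
Import ListNotations.
Open Scope R_scope.

Definition pt (a b : R) : nat -> R :=
  fun i => match i with 0%nat => a | 1%nat => b | _ => 0 end.

Lemma sqrt_le_of S w : 0 <= S -> 0 <= w -> S <= w^2 -> sqrt S <= w.
Proof. intros h1 h2 h3. rewrite <- (sqrt_pow2 w h2). now apply sqrt_le_1_alt. Qed.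

Lemma sqrt_le_inv S w : 0 <= S -> sqrt S <= w -> 0 <= w /\ S <= w^2.
Proof. intros h1 h2. pose proof (sqrt_pos S). split; [lra|].
  rewrite <- (pow2_sqrt S h1). apply pow_incr. lra. Qed.

Lemma soc_add a1 b1 c1 a2 b2 c2 :
  sqrt (a1^2 + b1^2) <= c1 -> sqrt (a2^2 + b2^2) <= c2 ->
  sqrt ((a1+a2)^2 + (b1+b2)^2) <= c1 + c2.
Proof.
  intros h1 h2.
  set (u := sqrt (a1^2+b1^2)) in *. set (v := sqrt (a2^2+b2^2)) in *.
  assert (hu : u*u = a1^2+b1^2) by (apply sqrt_sqrt; nra).
  assert (hv : v*v = a2^2+b2^2) by (apply sqrt_sqrt; nra).
  assert (u0 : 0 <= u) by apply sqrt_pos. assert (v0 : 0 <= v) by apply sqrt_pos.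
  assert (huv : a1*a2+b1*b2 <= u*v).
  { destruct (Rle_lt_dec (a1*a2+b1*b2) (u*v)) as [h|h]; [exact h|].
    assert (0 <= u*v) by nra.
    assert (e : (u*v)^2 = (a1^2+b1^2)*(a2^2+b2^2)) by (rewrite <- hu, <- hv; ring).
    assert (c : (a1*a2+b1*b2)^2 <= (u*v)^2).
    { rewrite e. pose proof (pow2_ge_0 (a1*b2-a2*b1)). nra. }
    nra. }
  apply Rle_trans with (u+v); [|lra].
  apply sqrt_le_of.
  - pose proof (pow2_ge_0 (a1+a2)). pose proof (pow2_ge_0 (b1+b2)). lra.
  - lra.
  - replace ((u+v)^2) with (u*u+v*v+2*(u*v)) by ring. rewrite hu, hv.
    replace ((a1 + a2) ^ 2 + (b1 + b2) ^ 2) with (a1^2+b1^2+(a2^2+b2^2)+2*(a1*a2+b1*b2)) by ring.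
    lra.
Qed.

Lemma soc_scale c a b w : 0 <= c -> sqrt (a^2+b^2) <= w -> sqrt ((c*a)^2+(c*b)^2) <= c*w.
Proof.
  intros hc h. replace ((c*a)^2+(c*b)^2) with (c^2*(a^2+b^2)) by ring.
  rewrite sqrt_mult by nra. rewrite sqrt_pow2 by lra.
  apply Rmult_le_compat_l; lra.
Qed.

Record piece := mkP { lin : list (R*R*R); sc : R; sp : R; sq : R; sr : R; sw : R }.

Definition linH (e : R*R*R) (l x y : R) : Prop :=
  fst (fst e) * l + snd (fst e) * x + snd e * y <= 0.

Definition H (P : piece) (l x y : R) : Prop :=
  Forall (fun e => linH e l x y) (lin P) /\
  sqrt ((sc P * l)^2 + (sp P * x + sq P * y)^2) <= sr P * x + sw P * y.

Lemma H_add P l1 x1 y1 l2 x2 y2 : H P l1 x1 y1 -> H P l2 x2 y2 ->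
  H P (l1+l2) (x1+x2) (y1+y2).
Proof.
  intros [h1 s1] [h2 s2]. split.
  - rewrite Forall_forall in *. intros e he. specialize (h1 e he). specialize (h2 e he).
    unfold linH in *. lra.
  - replace (sc P * (l1+l2)) with (sc P * l1 + sc P * l2) by ring.
    replace (sp P * (x1 + x2) + sq P * (y1 + y2)) with
      ((sp P * x1 + sq P * y1) + (sp P * x2 + sq P * y2)) by ring.
    replace (sr P * (x1 + x2) + sw P * (y1 + y2)) with
      ((sr P * x1 + sw P * y1) + (sr P * x2 + sw P * y2)) by ring.
    now apply soc_add.
Qed.

Lemma H_scale P c l x y : 0 <= c -> H P l x y -> H P (c*l) (c*x) (c*y).
Proof.
  intros hc [h s]. split.
  - rewrite Forall_forall in *. intros e he. specialize (h e he). unfold linH in *.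
    replace (fst (fst e) * (c * l) + snd (fst e) * (c * x) + snd e * (c * y))
      with (c * (fst (fst e) * l + snd (fst e) * x + snd e * y)) by ring. nra.
  - replace (sc P * (c*l)) with (c * (sc P * l)) by ring.
    replace (sp P * (c*x) + sq P * (c*y)) with (c * (sp P * x + sq P * y)) by ring.
    replace (sr P * (c*x) + sw P * (c*y)) with (c * (sr P * x + sw P * y)) by ring.
    now apply soc_scale.
Qed.

Lemma H_zero P : H P 0 0 0.
Proof.
  split.
  - rewrite Forall_forall. intros e _. unfold linH. lra.
  - replace ((sc P * 0)^2 + (sp P * 0 + sq P * 0)^2) with 0 by ring.
    rewrite sqrt_0. lra.
Qed.

Definition wsum (l : list (R * (nat -> R))) := fold_right (fun wp acc => fst wp + acc) 0 l.
Definition psum (l : list (R * (nat -> R))) i := fold_right (fun wp acc => fst wp * snd wp i + acc) 0 l.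

Lemma conv_ext T p q : (forall i, p i = q i) -> conv_hull T p -> conv_hull T q.
Proof. intros e [l [h1 [h2 h3]]]. exists l. split; [|split]; auto. intro i. rewrite <- e. auto. Qed.

Lemma conv_single (T : (nat -> R) -> Prop) p : T p -> conv_hull T p.
Proof. intro h. exists [(1,p)]. simpl. split; [constructor; [simpl; split; [lra|auto]|constructor]|].
  split; [ring|]. intro; ring. Qed.

Definition scl (c : R) (l : list (R * (nat -> R))) := map (fun wp => (c * fst wp, snd wp)) l.

Lemma wsum_app l1 l2 : wsum (l1 ++ l2) = wsum l1 + wsum l2.
Proof. induction l1; simpl; [ring|]. unfold wsum in *. simpl. rewrite IHl1. ring. Qed.
Lemma psum_app l1 l2 i : psum (l1 ++ l2) i = psum l1 i + psum l2 i.
Proof. induction l1; unfold psum in *; simpl; [ring|]. rewrite IHl1. ring. Qed.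
Lemma wsum_scl c l : wsum (scl c l) = c * wsum l.
Proof. induction l; unfold wsum, scl in *; simpl; [ring|]. rewrite IHl. ring. Qed.
Lemma psum_scl c l i : psum (scl c l) i = c * psum l i.
Proof. induction l; unfold psum, scl in *; simpl; [ring|]. rewrite IHl. ring. Qed.

Lemma conv_comb T p q a : 0 <= a <= 1 -> conv_hull T p -> conv_hull T q ->
  conv_hull T (fun i => a * p i + (1 - a) * q i).
Proof.
  intros ha [l1 [f1 [w1 e1]]] [l2 [f2 [w2 e2]]].
  exists (scl a l1 ++ scl (1-a) l2). split; [|split].
  - apply Forall_app. unfold scl. rewrite !Forall_map. split.
    + eapply Forall_impl; [|exact f1]. simpl. intros wp [h h']. split; [nra|auto].
    + eapply Forall_impl; [|exact f2]. simpl. intros wp [h h']. split; [nra|auto].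
  - change (wsum (scl a l1 ++ scl (1-a) l2) = 1). rewrite wsum_app, !wsum_scl.
    unfold wsum. rewrite w1, w2. ring.
  - intro i. change (a * p i + (1 - a) * q i = psum (scl a l1 ++ scl (1-a) l2) i).
    rewrite psum_app, !psum_scl. unfold psum. rewrite <- e1, <- e2. ring.
Qed.
Section Disj.
Variable T : (nat -> R) -> Prop.
Variables P1 P2 : piece.
Hypothesis Tcan : forall p, T p -> canonical 2 p.
Hypothesis cover : forall p, T p -> H P1 1 (p 0%nat) (p 1%nat) \/ H P2 1 (p 0%nat) (p 1%nat).
Hypothesis conv1 : forall x y, H P1 1 x y -> conv_hull T (pt x y).
Hypothesis conv2 : forall x y, H P2 1 x y -> conv_hull T (pt x y).
Hypothesis zero1 : forall x y, H P1 0 x y -> x = 0 /\ y = 0.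
Hypothesis zero2 : forall x y, H P2 0 x y -> x = 0 /\ y = 0.

Definition sem (x : nat -> R) := exists l1 x1 y1 l2 x2 y2,
  0 <= l1 /\ 0 <= l2 /\ l1 + l2 = 1 /\ x 0%nat = x1 + x2 /\ x 1%nat = y1 + y2 /\
  H P1 l1 x1 y1 /\ H P2 l2 x2 y2.

Lemma fwd_list l : Forall (fun wp => 0 <= fst wp /\ T (snd wp)) l ->
  exists l1 x1 y1 l2 x2 y2, 0 <= l1 /\ 0 <= l2 /\ l1 + l2 = wsum l /\
   psum l 0 = x1 + x2 /\ psum l 1 = y1 + y2 /\ H P1 l1 x1 y1 /\ H P2 l2 x2 y2.
Proof.
  induction l as [|[w p] l IH]; intro hf.
  - exists 0, 0, 0, 0, 0, 0. unfold wsum, psum; simpl.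
    do 5 (split; [lra|]). split; apply H_zero.
  - inversion hf as [|? ? [hw hT] hl]; subst.
    destruct (IH hl) as (l1 & x1 & y1 & l2 & x2 & y2 & a1 & a2 & e1 & e2 & e3 & h1 & h2).
    unfold wsum, psum in *; simpl in *.
    destruct (cover p hT) as [c|c]; pose proof (H_scale _ w _ _ _ hw c) as c';
      rewrite Rmult_1_r in c'.
    + exists (w + l1), (w * p 0%nat + x1), (w * p 1%nat + y1), l2, x2, y2.
      do 5 (split; [lra|]). split; auto. now apply H_add.
    + exists l1, x1, y1, (w + l2), (w * p 0%nat + x2), (w * p 1%nat + y2).
      do 5 (split; [lra|]). split; auto. now apply H_add.
Qed.

Lemma conv_iff_sem x : canonical 2 x -> (conv_hull T x <-> sem x).
Proof.
  intro cx. split.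
  - intros [l [f [w e]]].
    destruct (fwd_list l f) as (l1 & x1 & y1 & l2 & x2 & y2 & a1 & a2 & e1 & e2 & e3 & h1 & h2).
    exists l1, x1, y1, l2, x2, y2. do 2 (split; [auto|]). split; [|split; [|split; [|split; auto]]].
    + fold (wsum l) in w. lra.
    + rewrite e. exact e2.
    + rewrite e. exact e3.
  - intros (l1 & x1 & y1 & l2 & x2 & y2 & a1 & a2 & s & ex & ey & h1 & h2).
    assert (ptx : forall i, pt (x 0%nat) (x 1%nat) i = x i).
    { intros [|[|i]]; simpl; auto. symmetry. apply cx. lia. }
    destruct (Req_dec l1 0) as [z1|z1].
    + subst l1. destruct (zero1 _ _ h1) as [-> ->].
      replace l2 with 1 in h2 by lra.
      apply (conv_ext _ (pt (x 0%nat) (x 1%nat))); auto.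
      rewrite ex, ey, !Rplus_0_l. auto.
    + destruct (Req_dec l2 0) as [z2|z2].
      * subst l2. destruct (zero2 _ _ h2) as [-> ->].
        replace l1 with 1 in h1 by lra.
        apply (conv_ext _ (pt (x 0%nat) (x 1%nat))); auto.
        rewrite ex, ey, !Rplus_0_r. auto.
      * apply (H_scale _ (/ l1)) in h1; [|apply Rlt_le, Rinv_0_lt_compat; lra].
        apply (H_scale _ (/ l2)) in h2; [|apply Rlt_le, Rinv_0_lt_compat; lra].
        rewrite Rinv_l in h1 by auto. rewrite Rinv_l in h2 by auto.
        apply conv1 in h1. apply conv2 in h2.
        pose proof (conv_comb _ _ _ l1 ltac:(lra) h1 h2) as hc.
        refine (conv_ext _ _ _ _ hc).
        intros [|[|i]]; simpl.
        -- rewrite ex. replace (1 - l1) with l2 by lra. field. auto.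
        -- rewrite ey. replace (1 - l1) with l2 by lra. field. auto.
        -- rewrite cx by lia. ring.
Qed.
End Disj.
Definition vec3 (l i j : nat) (a0 a1 a2 : R) : nat -> R :=
  fun k => if Nat.eqb k l then a0 else if Nat.eqb k i then a1 else if Nat.eqb k j then a2 else 0.

Lemma dot234 z a b c : dotn 8 (vec3 2 3 4 a b c) z = a * z 2%nat + b * z 3%nat + c * z 4%nat.
Proof. unfold dotn, vec3. simpl. ring. Qed.
Lemma dot567 z a b c : dotn 8 (vec3 5 6 7 a b c) z = a * z 5%nat + b * z 6%nat + c * z 7%nat.
Proof. unfold dotn, vec3. simpl. ring. Qed.

Definition linraw (P : piece) l i j : list ((nat -> R) * R) :=
  map (fun e => (vec3 l i j (fst (fst e)) (snd (fst e)) (snd e), 0)) (lin P).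

Definition socraw (P : piece) l i j : soc_constraint :=
  {| soc_rows := 2;
     soc_A := fun r => match r with 0%nat => vec3 l i j (sc P) 0 0 | _ => vec3 l i j 0 (sp P) (sq P) end;
     soc_b := fun _ => 0;
     soc_c := vec3 l i j 0 (sr P) (sw P);
     soc_d := 0 |}.

Lemma soc234 P z : soc_holds 8 (socraw P 2 3 4) z <->
  sqrt ((sc P * z 2%nat)^2 + (sp P * z 3%nat + sq P * z 4%nat)^2) <= sr P * z 3%nat + sw P * z 4%nat.
Proof.
  unfold soc_holds, socraw. cbn [soc_rows soc_A soc_b soc_c soc_d sumR].
  rewrite !dot234.
  match goal with |- sqrt ?a <= ?b <-> sqrt ?c <= ?d =>
    replace a with c by ring; replace b with d by ring end. tauto.
Qed.
Lemma soc567 P z : soc_holds 8 (socraw P 5 6 7) z <->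
  sqrt ((sc P * z 5%nat)^2 + (sp P * z 6%nat + sq P * z 7%nat)^2) <= sr P * z 6%nat + sw P * z 7%nat.
Proof.
  unfold soc_holds, socraw. cbn [soc_rows soc_A soc_b soc_c soc_d sumR].
  rewrite !dot567.
  match goal with |- sqrt ?a <= ?b <-> sqrt ?c <= ?d =>
    replace a with c by ring; replace b with d by ring end. tauto.
Qed.

Lemma lin234 P z : Forall (fun e => dotn 8 (fst e) z <= snd e) (linraw P 2 3 4) <->
  Forall (fun e => linH e (z 2%nat) (z 3%nat) (z 4%nat)) (lin P).
Proof.
  unfold linraw. rewrite Forall_map. rewrite !Forall_forall. split; intros h e he;
  specialize (h e he); simpl in *; rewrite ?dot234 in *; unfold linH in *; lra.
Qed.
Lemma lin567 P z : Forall (fun e => dotn 8 (fst e) z <= snd e) (linraw P 5 6 7) <->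
  Forall (fun e => linH e (z 5%nat) (z 6%nat) (z 7%nat)) (lin P).
Proof.
  unfold linraw. rewrite Forall_map. rewrite !Forall_forall. split; intros h e he;
  specialize (h e he); simpl in *; rewrite ?dot567 in *; unfold linH in *; lra.
Qed.

Definition eqs : list ((nat -> R) * R) :=
  [ ((fun k => match k with 0%nat => 1 | 3%nat => -1 | 6%nat => -1 | _ => 0 end), 0);
    ((fun k => match k with 1%nat => 1 | 4%nat => -1 | 7%nat => -1 | _ => 0 end), 0);
    ((fun k => match k with 2%nat => 1 | 5%nat => 1 | _ => 0 end), 1) ].
Definition ineqs0 : list ((nat -> R) * R) :=
  [ ((fun k => match k with 2%nat => -1 | _ => 0 end), 0);
    ((fun k => match k with 5%nat => -1 | _ => 0 end), 0) ].

Lemma raw_iff P1 P2 x :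
  (exists u : nat -> R, let z := join 2 x u in
     Forall (fun e => dotn (2 + 6) (fst e) z = snd e) eqs /\
     Forall (fun e => dotn (2 + 6) (fst e) z <= snd e) (ineqs0 ++ linraw P1 2 3 4 ++ linraw P2 5 6 7) /\
     Forall (fun C => soc_holds (2 + 6) C z) [socraw P1 2 3 4; socraw P2 5 6 7])
  <-> sem P1 P2 x.
Proof.
  split.
  - intros [u hh]. cbv zeta in hh. set (z := join 2 x u) in hh. destruct hh as [he [hi hs]].
    assert (z0 : z 0%nat = x 0%nat) by reflexivity.
    assert (z1 : z 1%nat = x 1%nat) by reflexivity.
    assert (z2 : z 2%nat = u 0%nat) by reflexivity.
    assert (z3 : z 3%nat = u 1%nat) by reflexivity.
    assert (z4 : z 4%nat = u 2%nat) by reflexivity.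
    assert (z5 : z 5%nat = u 3%nat) by reflexivity.
    assert (z6 : z 6%nat = u 4%nat) by reflexivity.
    assert (z7 : z 7%nat = u 5%nat) by reflexivity.
    rewrite !Forall_app in hi. destruct hi as [hi0 [hi1 hi2]].
    change (2+6)%nat with 8%nat in *.
    rewrite lin234 in hi1. rewrite lin567 in hi2.
    inversion hs as [|? ? s1 hs']; subst. inversion hs' as [|? ? s2 _]; subst.
    rewrite soc234 in s1. rewrite soc567 in s2.
    unfold eqs in he. rewrite !Forall_cons_iff in he. destruct he as [e1 [e2 [e3 _]]].
    unfold ineqs0 in hi0. rewrite !Forall_cons_iff in hi0. destruct hi0 as [i1 [i2 _]].
    unfold dotn in e1, e2, e3, i1, i2; simpl in e1, e2, e3, i1, i2.
    rewrite ?z0, ?z1, ?z2, ?z3, ?z4, ?z5, ?z6, ?z7 in *.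
    exists (u 0%nat), (u 1%nat), (u 2%nat), (u 3%nat), (u 4%nat), (u 5%nat).
    split; [lra|]. split; [lra|]. split; [lra|]. split; [lra|]. split; [lra|].
    split; split; auto.
  - intros (l1 & x1 & y1 & l2 & x2 & y2 & a1 & a2 & s & ex & ey & [h1 s1] & [h2 s2]).
    exists (fun k => match k with 0%nat => l1 | 1%nat => x1 | 2%nat => y1 | 3%nat => l2
                     | 4%nat => x2 | _ => y2 end).
    change (2+6)%nat with 8%nat. cbv zeta.
    split; [|split].
    + unfold eqs. repeat (apply Forall_cons; [unfold dotn, join; simpl; lra|]); apply Forall_nil.
    + rewrite !Forall_app. split; [|split].
      * unfold ineqs0. repeat (apply Forall_cons; [unfold dotn, join; simpl; lra|]); apply Forall_nil.
      * rewrite lin234. unfold join; simpl. exact h1.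
      * rewrite lin567. unfold join; simpl. exact h2.
    + constructor; [|constructor; [|constructor]].
      * rewrite soc234. unfold join; simpl. exact s1.
      * rewrite soc567. unfold join; simpl. exact s2.
Qed.

Lemma rep_of_disj T P1 P2 :
  (forall p, T p -> canonical 2 p) ->
  (forall p, T p -> H P1 1 (p 0%nat) (p 1%nat) \/ H P2 1 (p 0%nat) (p 1%nat)) ->
  (forall x y, H P1 1 x y -> conv_hull T (pt x y)) ->
  (forall x y, H P2 1 x y -> conv_hull T (pt x y)) ->
  (forall x y, H P1 0 x y -> x = 0 /\ y = 0) ->
  (forall x y, H P2 0 x y -> x = 0 /\ y = 0) ->
  soc_representable 2 (conv_hull T).
Proof.
  intros Tc cov c1 c2 z1 z2.
  exists 6%nat, eqs, (ineqs0 ++ linraw P1 2 3 4 ++ linraw P2 5 6 7), [socraw P1 2 3 4; socraw P2 5 6 7].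
  intros x cx. rewrite (conv_iff_sem T P1 P2 cov c1 c2 z1 z2 x cx).
  symmetry. apply raw_iff.
Qed.
Definition emptyP := mkP [(1,0,0);(0,1,0);(0,-1,0);(0,0,1);(0,0,-1)] 0 0 0 0 0.
Definition vsegP lo hi := mkP [(0,1,0);(0,-1,0);(lo,0,-1);(-hi,0,1)] 0 0 0 0 0.
Definition hsegP lo hi := mkP [(0,0,1);(0,0,-1);(lo,-1,0);(-hi,1,0)] 0 0 0 0 0.
Definition arcP s t A B b :=
  mkP [(A,-s,0);(-B,s,0);(-b*(A+B), b*s, A*B*t)] (2*sqrt b) s (-t) s t.

Lemma soc0 l x y : sqrt ((0*l)^2 + (0*x+0*y)^2) <= 0*x+0*y.
Proof. replace ((0*l)^2 + (0*x+0*y)^2) with 0 by ring. rewrite sqrt_0. lra. Qed.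

Lemma H_empty l x y : H emptyP l x y <-> l <= 0 /\ x = 0 /\ y = 0.
Proof.
  unfold H, emptyP, linH. cbn [lin sc sp sq sr sw]. rewrite !Forall_cons_iff. cbn [fst snd].
  split.
  - intros [[a [b [c [d [e _]]]]] _]. lra.
  - intros [a [b c]]. split; [|apply soc0]. repeat split; try lra. constructor.
Qed.

Lemma H_vseg lo hi l x y : H (vsegP lo hi) l x y <-> x = 0 /\ lo*l <= y <= hi*l.
Proof.
  unfold H, vsegP, linH. cbn [lin sc sp sq sr sw]. rewrite !Forall_cons_iff. cbn [fst snd].
  split.
  - intros [[a [b [c [d _]]]] _]. lra.
  - intros [a [b c]]. split; [|apply soc0]. repeat split; try lra. constructor.
Qed.

Lemma H_hseg lo hi l x y : H (hsegP lo hi) l x y <-> y = 0 /\ lo*l <= x <= hi*l.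
Proof.
  unfold H, hsegP, linH. cbn [lin sc sp sq sr sw]. rewrite !Forall_cons_iff. cbn [fst snd].
  split.
  - intros [[a [b [c [d _]]]] _]. lra.
  - intros [a [b c]]. split; [|apply soc0]. repeat split; try lra. constructor.
Qed.

Lemma H_arc s t A B b l X Y : s*s = 1 -> t*t = 1 -> 0 < b ->
  (H (arcP s t A B b) l (s*X) (t*Y) <->
   (A*l <= X <= B*l /\ A*B*Y <= b*(l*(A+B) - X)) /\
   sqrt (4*b*l^2 + (X-Y)^2) <= X+Y).
Proof.
  intros hs ht hb.
  assert (sb : sqrt b * sqrt b = b) by (apply sqrt_sqrt; lra).
  unfold H, arcP, linH. cbn [lin sc sp sq sr sw]. rewrite !Forall_cons_iff. cbn [fst snd].
  replace ((2 * sqrt b * l) ^ 2) with (4*(sqrt b * sqrt b)*l^2) by ring. rewrite sb.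
  replace (s * (s * X) + - t * (t * Y)) with ((s*s)*X - (t*t)*Y) by ring.
  replace (s * (s * X) + t * (t * Y)) with ((s*s)*X + (t*t)*Y) by ring.
  rewrite hs, ht, !Rmult_1_l.
  assert (e1 : A * l + - s * (s * X) + 0 * (t * Y) = A*l - (s*s)*X) by ring.
  assert (e2 : - B * l + s * (s * X) + 0 * (t * Y) = - B*l + (s*s)*X) by ring.
  assert (e3 : - b * (A + B) * l + b * s * (s * X) + A * B * t * (t * Y) =
               - b * (A + B) * l + b * (s*s) * X + A*B*(t*t)*Y) by ring.
  rewrite e1, e2, e3, hs, ht.
  split.
  - intros [[a [c [d _]]] e]. split; [split; [split|]|]; try lra; exact e.
  - intros [[[a c] d] e]. split; [|exact e]. repeat split; try lra. constructor.
Qed.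
Lemma divX b X : 0 < X -> b / X * X = b.
Proof. intro. field. lra. Qed.

Lemma quad a1 a2 b1 b2 b : 0 < b ->
  (forall X, 0 < X -> a1 <= X <= a2 -> b1 <= b/X <= b2 -> False) \/
  exists A B, 0 < A /\ A <= B /\
    (forall X, 0 < X -> a1 <= X <= a2 -> b1 <= b/X <= b2 -> A <= X <= B) /\
    (forall X, A <= X <= B -> a1 <= X <= a2 /\ b1 <= b/X <= b2).
Proof.
  intro hb.
  destruct (classic (exists X, 0 < X /\ a1 <= X <= a2 /\ b1 <= b/X <= b2)) as [[X0 [h0 [h1 h2]]]|hn].
  2:{ left. intros X p q r. apply hn. eauto. }
  right.
  assert (e0 := divX b X0 h0).
  assert (pY0 : 0 < b / X0) by (apply Rdiv_lt_0_compat; lra).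
  assert (hb2 : 0 < b2) by lra.
  set (c := b / b2). assert (ec : c * b2 = b) by (unfold c; field; lra).
  assert (hc : 0 < c) by (unfold c; apply Rdiv_lt_0_compat; lra).
  assert (K1 : forall X, 0 < X -> b/X <= b2 -> c <= X).
  { intros X hX hy. pose proof (divX b X hX). nra. }
  assert (K2 : forall X, 0 < c -> c <= X -> b/X <= b2).
  { intros X _ hX. assert (0 < X) by lra. pose proof (divX b X H0).
    assert (0 < b / X) by (apply Rdiv_lt_0_compat; lra). nra. }
  set (A := Rmax a1 c).
  assert (hA : 0 < A) by (unfold A; pose proof (Rmax_r a1 c); lra).
  assert (A0 : A <= X0) by (unfold A; apply Rmax_lub; [lra|apply K1; lra]).
  destruct (Rle_lt_dec b1 0) as [hb1|hb1].
  - exists A, a2. split; [exact hA|]. split; [lra|]. split.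
    + intros X hX [p q] [r u]. split; [|lra]. unfold A. apply Rmax_lub; [lra|]. now apply K1.
    + intros X [p q]. pose proof (Rmax_l a1 c) as m1. pose proof (Rmax_r a1 c) as m2. fold A in m1, m2.
      assert (0 < X) by lra. assert (0 < b / X) by (apply Rdiv_lt_0_compat; lra).
      split; [lra|]. split; [lra|]. apply K2; lra.
  - set (d := b / b1). assert (ed : d * b1 = b) by (unfold d; field; lra).
    assert (K3 : forall X, 0 < X -> b1 <= b/X -> X <= d).
    { intros X hX hy. pose proof (divX b X hX). nra. }
    assert (K4 : forall X, 0 < X -> X <= d -> b1 <= b/X).
    { intros X hX hy. pose proof (divX b X hX).
      assert (0 < b / X) by (apply Rdiv_lt_0_compat; lra). nra. }
    exists A, (Rmin a2 d). split; [exact hA|]. split.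
    { apply Rmin_glb; [lra|]. apply Rle_trans with X0; [lra|]. apply K3; lra. }
    split.
    + intros X hX [p q] [r u]. split.
      * unfold A. apply Rmax_lub; [lra|]. now apply K1.
      * apply Rmin_glb; [lra|]. now apply K3.
    + intros X [p q]. pose proof (Rmax_l a1 c) as m1. pose proof (Rmax_r a1 c) as m2. fold A in m1, m2.
      pose proof (Rmin_l a2 d). pose proof (Rmin_r a2 d).
      assert (0 < X) by lra.
      split; [lra|]. split; [apply K4; lra|]. apply K2; lra.
Qed.

Lemma arc_comb (T : (nat -> R) -> Prop) s t A B b X Y : 0 < A -> A <= B -> 0 < b ->
  (forall X', A <= X' <= B -> T (pt (s*X') (t*(b/X')))) ->
  A <= X <= B -> A*B*Y <= b*(A+B-X) -> b <= X*Y ->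
  conv_hull T (pt (s*X) (t*Y)).
Proof.
  intros hA hAB hb hQ hX hch hxy.
  assert (X0 : 0 < X) by lra.
  destruct (Req_dec X A) as [eA|nA].
  { subst X. assert (Y = b / A).
    { assert (A*Y <= b).
      { apply (Rmult_le_reg_l B); [lra|].
        replace (B*(A*Y)) with (A*B*Y) by ring. replace (b*(A+B-A)) with (B*b) in hch by ring. lra. }
      apply Rle_antisym.
      - apply (Rmult_le_reg_l A); [lra|]. field_simplify; lra.
      - apply (Rmult_le_reg_l A); [lra|]. field_simplify; lra. }
    subst Y. apply conv_single. apply hQ. lra. }
  destruct (Req_dec X B) as [eB|nB].
  { subst X. assert (Y = b / B).
    { assert (B*Y <= b).
      { apply (Rmult_le_reg_l A); [lra|].
        replace (A*(B*Y)) with (A*B*Y) by ring. replace (b*(A+B-B)) with (A*b) in hch by ring. lra. }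
      apply Rle_antisym.
      - apply (Rmult_le_reg_l B); [lra|]. field_simplify; lra.
      - apply (Rmult_le_reg_l B); [lra|]. field_simplify; lra. }
    subst Y. apply conv_single. apply hQ. lra. }
  assert (lt1 : A < X) by lra. assert (lt2 : X < B) by lra.
  set (g := b / X). set (h := b*(A+B-X)/(A*B)).
  assert (hg : g <= Y).
  { unfold g. apply (Rmult_le_reg_l X); [lra|]. field_simplify; lra. }
  assert (hh : Y <= h).
  { unfold h. apply (Rmult_le_reg_l (A*B)); [nra|]. field_simplify; try lra. }
  assert (hgh : h - g = b*(B-X)*(X-A)/(A*B*X)) by (unfold g, h; field; repeat split; lra).
  assert (pgh : 0 < h - g).
  { rewrite hgh. apply Rdiv_lt_0_compat.
    - apply Rmult_lt_0_compat; [apply Rmult_lt_0_compat|]; lra.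
    - apply Rmult_lt_0_compat; [apply Rmult_lt_0_compat|]; lra. }
  set (nu := (B-X)/(B-A)). set (mu := (Y-g)/(h-g)).
  assert (hnu : 0 <= nu <= 1).
  { unfold nu. split.
    - unfold Rdiv; apply Rmult_le_pos; [lra|left; apply Rinv_0_lt_compat; lra].
    - apply (Rmult_le_reg_l (B-A)); [lra|]. field_simplify; lra. }
  assert (hmu : 0 <= mu <= 1).
  { unfold mu. split.
    - unfold Rdiv; apply Rmult_le_pos; [lra|left; apply Rinv_0_lt_compat; lra].
    - apply (Rmult_le_reg_l (h-g)); [lra|]. field_simplify; lra. }
  assert (eC1 : nu*A + (1-nu)*B = X) by (unfold nu; field; lra).
  assert (eC2 : nu*(b/A) + (1-nu)*(b/B) = h) by (unfold nu, h; field; repeat split; lra).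
  assert (eM : mu*h + (1-mu)*g = Y) by (unfold mu; field; lra).
  pose proof (conv_comb T _ _ nu hnu (conv_single T _ (hQ A ltac:(lra)))
                (conv_single T _ (hQ B ltac:(lra)))) as hC.
  pose proof (conv_comb T _ _ mu hmu hC (conv_single T _ (hQ X ltac:(lra)))) as hF.
  refine (conv_ext _ _ _ _ hF).
  intros [|[|i]]; simpl; symmetry.
  - transitivity (s * (mu * (nu*A + (1-nu)*B) + (1-mu)*X)); [rewrite eC1; ring|ring].
  - transitivity (t * (mu * (nu*(b/A) + (1-nu)*(b/B)) + (1-mu)*g)); [rewrite eC2, eM; ring|unfold g; ring].
  - ring.
Qed.
Definition good (T : (nat -> R) -> Prop) P (Rg : R -> R -> Prop) :=
  (forall p, T p -> Rg (p 0%nat) (p 1%nat) -> H P 1 (p 0%nat) (p 1%nat)) /\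
  (forall x y, H P 1 x y -> conv_hull T (pt x y)) /\
  (forall x y, H P 0 x y -> x = 0 /\ y = 0).

Lemma rep_good T P1 P2 R1 R2 : (forall p, T p -> canonical 2 p) -> good T P1 R1 -> good T P2 R2 ->
  (forall p, T p -> R1 (p 0%nat) (p 1%nat) \/ R2 (p 0%nat) (p 1%nat)) ->
  soc_representable 2 (conv_hull T).
Proof.
  intros Tc [a1 [b1 c1]] [a2 [b2 c2]] cov.
  apply (rep_of_disj T P1 P2); auto.
  intros p hp. destruct (cov p hp); [left|right]; auto.
Qed.

Lemma T_pt xl xu yl yu alpha x y :
  T_alpha xl xu yl yu alpha (pt x y) <-> x*y = alpha /\ (xl <= x <= xu) /\ (yl <= y <= yu).
Proof.
  unfold T_alpha. cbn [pt]. split; [tauto|]. intros h. split; [|exact h].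
  intros [|[|i]] hi; [lia|lia|reflexivity].
Qed.

Lemma T_eta xl xu yl yu alpha p : T_alpha xl xu yl yu alpha p ->
  forall i, p i = pt (p 0%nat) (p 1%nat) i.
Proof. intros [c _] [|[|i]]; simpl; auto. apply c. lia. Qed.

Lemma sgn_cases s : s = 1 \/ s = -1 -> s * s = 1.
Proof. intros [->| ->]; ring. Qed.

Lemma box_iff s lo hi X : s = 1 \/ s = -1 -> lo < hi ->
  (Rmin (s*lo) (s*hi) <= X <= Rmax (s*lo) (s*hi) <-> lo <= s*X <= hi).
Proof.
  intros [->| ->] h; unfold Rmin, Rmax; destruct Rle_dec; lra.
Qed.

Section Main.
Variables xl xu yl yu alpha : R.
Hypothesis hx : xl < xu.
Hypothesis hy : yl < yu.
Let T := T_alpha xl xu yl yu alpha.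

Lemma good_v : alpha = 0 -> exists P, good T P (fun x y => x = 0).
Proof.
  intro a0. destruct (classic (xl <= 0 <= xu)) as [h|h].
  - exists (vsegP yl yu). split; [|split].
    + intros p hp e. destruct hp as [_ [_ [_ hb]]]. apply H_vseg. lra.
    + intros x y hv. apply H_vseg in hv. destruct hv as [-> hb].
      apply conv_single. apply T_pt. split; [lra|]. split; lra.
    + intros x y hv. apply H_vseg in hv. lra.
  - exists emptyP. split; [|split].
    + intros p hp e. destruct hp as [_ [_ [ha _]]]. exfalso. apply h. lra.
    + intros x y hv. apply H_empty in hv. lra.
    + intros x y hv. apply H_empty in hv. lra.
Qed.

Lemma good_h : alpha = 0 -> exists P, good T P (fun x y => y = 0).
Proof.
  intro a0. destruct (classic (yl <= 0 <= yu)) as [h|h].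
  - exists (hsegP xl xu). split; [|split].
    + intros p hp e. destruct hp as [_ [_ [ha _]]]. apply H_hseg. lra.
    + intros x y hv. apply H_hseg in hv. destruct hv as [-> hb].
      apply conv_single. apply T_pt. split; [lra|]. split; lra.
    + intros x y hv. apply H_hseg in hv. lra.
  - exists emptyP. split; [|split].
    + intros p hp e. destruct hp as [_ [_ [_ hb]]]. exfalso. apply h. lra.
    + intros x y hv. apply H_empty in hv. lra.
    + intros x y hv. apply H_empty in hv. lra.
Qed.

Lemma good_q s t : s = 1 \/ s = -1 -> t = 1 \/ t = -1 -> 0 < s*t*alpha ->
  exists P, good T P (fun x y => 0 < s*x).
Proof.
  intros s1 t1 hb. pose proof (sgn_cases s s1) as hs. pose proof (sgn_cases t t1) as ht.
  set (b := s*t*alpha) in *.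
  assert (ea : s*t*b = alpha) by (unfold b; replace (s*t*(s*t*alpha)) with ((s*s)*(t*t)*alpha) by ring;
                                  rewrite hs, ht; ring).
  assert (exs : forall x, s*(s*x) = x) by (intro; rewrite <- Rmult_assoc, hs; ring).
  assert (ext : forall y, t*(t*y) = y) by (intro; rewrite <- Rmult_assoc, ht; ring).
  assert (TQ : forall x y, T (pt x y) -> 0 < s*x ->
            (s*x)*(t*y) = b /\ t*y = b/(s*x) /\
            Rmin (s*xl) (s*xu) <= s*x <= Rmax (s*xl) (s*xu) /\
            Rmin (t*yl) (t*yu) <= b/(s*x) <= Rmax (t*yl) (t*yu)).
  { intros x y hT hX. apply T_pt in hT. destruct hT as [e [bx by']].
    assert (eXY : (s*x)*(t*y) = b) by (unfold b; rewrite <- e;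
       replace (s*x*(t*y)) with (s*t*(x*y)) by ring; reflexivity).
    assert (eY : t*y = b/(s*x)) by (rewrite <- eXY; set (X := s*x) in *; field; lra).
    split; [exact eXY|]. split; [exact eY|]. split.
    - apply box_iff; auto. rewrite exs. lra.
    - rewrite <- eY. apply box_iff; auto. rewrite ext. lra. }
  destruct (quad (Rmin (s*xl) (s*xu)) (Rmax (s*xl) (s*xu)) (Rmin (t*yl) (t*yu)) (Rmax (t*yl) (t*yu)) b hb)
    as [hn|(A&B&hA&hAB&hin&hout)].
  - exists emptyP. split; [|split].
    + intros p hp e. exfalso.
      assert (hp' : T (pt (p 0%nat) (p 1%nat))) by (apply T_pt; destruct hp as [_ h]; exact h).
      destruct (TQ _ _ hp' e) as [eXY [eY [bx by']]].
      exact (hn (s * p 0%nat) e bx by').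
    + intros x y hv. apply H_empty in hv. lra.
    + intros x y hv. apply H_empty in hv. lra.
  - exists (arcP s t A B b). split; [|split].
    + intros p hp e.
      assert (hp' : T (pt (p 0%nat) (p 1%nat))) by (apply T_pt; destruct hp as [_ h]; exact h).
      set (x := p 0%nat) in *. set (y := p 1%nat) in *.
      destruct (TQ _ _ hp' e) as [eXY [eY [bx by']]].
      destruct (hin (s*x) e bx by') as [i1 i2].
      assert (G : H (arcP s t A B b) 1 (s*(s*x)) (t*(t*y))).
      2:{ rewrite exs, ext in G. exact G. }
      apply H_arc; auto.
      set (X := s*x) in *. set (Y := t*y) in *.
      assert (hY : 0 < Y) by (rewrite eY; apply Rdiv_lt_0_compat; lra).
      split; [split; [lra|]|].
      * apply (Rmult_le_reg_l X); [lra|].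
        replace (X*(A*B*Y)) with (A*B*(X*Y)) by ring. rewrite eXY.
        assert (0 <= (X-A)*(B-X)) by (apply Rmult_le_pos; lra).
        replace (X * (b * (1 * (A + B) - X))) with (A*B*b + b*((X-A)*(B-X))) by ring.
        assert (0 <= b*((X-A)*(B-X))) by (apply Rmult_le_pos; lra). lra.
      * apply sqrt_le_of.
        -- pose proof (pow2_ge_0 (X-Y)). lra.
        -- lra.
        -- replace ((X+Y)^2) with ((X-Y)^2 + 4*(X*Y)) by ring. rewrite eXY. lra.
    + intros x y hv. rewrite <- (exs x), <- (ext y) in hv. rewrite <- (exs x), <- (ext y).
      apply H_arc in hv; auto.
      set (X := s*x) in *. set (Y := t*y) in *.
      destruct hv as [[[i1 i2] hc] hq].
      rewrite pow1, !Rmult_1_r in hq. rewrite !Rmult_1_r in i1, i2. rewrite Rmult_1_l in hc.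
      assert (hq' : 0 <= X + Y /\ 4*b + (X-Y)^2 <= (X+Y)^2).
      { apply sqrt_le_inv; [pose proof (pow2_ge_0 (X-Y)); lra|exact hq]. }
      apply (arc_comb T s t A B b X Y); auto.
      * intros X' hX'. apply T_pt. destruct (hout X' hX') as [ha hb'].
        apply (box_iff s xl xu X' s1 hx) in ha. apply (box_iff t yl yu (b/X') t1 hy) in hb'.
        split; [|split; auto].
        rewrite <- ea. field. lra.
      * destruct hq' as [_ hq2]. nra.
    + intros x y hv. rewrite <- (exs x), <- (ext y) in hv.
      apply H_arc in hv; auto.
      set (X := s*x) in *. set (Y := t*y) in *.
      destruct hv as [[[i1 i2] hc] hq].
      replace (4*b*0^2) with 0 in hq by ring. rewrite !Rmult_0_r in i1, i2.
      assert (hq' : 0 <= X + Y /\ 0 + (X-Y)^2 <= (X+Y)^2).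
      { apply sqrt_le_inv; [pose proof (pow2_ge_0 (X-Y)); lra|exact hq]. }
      assert (X0 : X = 0) by lra.
      rewrite X0 in hc. replace (b * (0 * (A + B) - 0)) with 0 in hc by ring.
      assert (hY : Y <= 0).
      { destruct (Rle_lt_dec Y 0) as [h|h]; auto.
        assert (0 < A*B*Y) by (apply Rmult_lt_0_compat; [apply Rmult_lt_0_compat|]; lra). lra. }
      assert (Y0 : Y = 0) by lra.
      rewrite <- (exs x), <- (ext y). fold X Y. rewrite X0, Y0. split; ring.
Qed.

Lemma main_rep : soc_representable 2 (conv_hull T).
Proof.
  assert (Tc : forall p, T p -> canonical 2 p) by (intros p [c _]; exact c).
  assert (Tm : forall p, T p -> p 0%nat * p 1%nat = alpha) by (intros p [_ [m _]]; exact m).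
  destruct (Rtotal_order alpha 0) as [neg|[z|pos]].
  - destruct (good_q 1 (-1)) as [P1 g1]; [lra|lra|lra|].
    destruct (good_q (-1) 1) as [P2 g2]; [lra|lra|lra|].
    apply (rep_good T P1 P2 _ _ Tc g1 g2).
    intros p hp. pose proof (Tm p hp).
    destruct (Rtotal_order (p 0%nat) 0) as [a|[a|a]]; [right|exfalso|left]; try lra.
    rewrite a in H0. lra.
  - destruct (good_v z) as [P1 g1]. destruct (good_h z) as [P2 g2].
    apply (rep_good T P1 P2 _ _ Tc g1 g2).
    intros p hp. pose proof (Tm p hp). rewrite z in H0. now apply Rmult_integral.
  - destruct (good_q 1 1) as [P1 g1]; [lra|lra|lra|].
    destruct (good_q (-1) (-1)) as [P2 g2]; [lra|lra|lra|].
    apply (rep_good T P1 P2 _ _ Tc g1 g2).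
    intros p hp. pose proof (Tm p hp).
    destruct (Rtotal_order (p 0%nat) 0) as [a|[a|a]]; [right|exfalso|left]; try lra.
    rewrite a in H0. lra.
Qed.
End Main.

Theorem proposition12 (xl xu yl yu alpha : R) (hx : xl < xu) (hy : yl < yu) :
  soc_representable 2 (conv_hull (T_alpha xl xu yl yu alpha)).
Proof. exact (main_rep xl xu yl yu alpha hx hy). Qed.
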